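(* Fix integers $k_1,k_2$ with $-1\le k_1\le k_2$ and an integer $m\ge 2k_1+2$. For $(x_1,\ldots,x_{m-1})\in\mathbb{Z}_{\ge0}^{m-1}$ let $\overline{x}=(x_1,\ldots,x_{2k_1+1})$. There is a bijection between the set of numerical semigroups $S$ with $m(S)=m$, $g(S)=m+k_1$ and $e(S)=g(S)-k_2$, and the set of sequences $(x_1,\ldots,x_{m-1})$ satisfying: (1) $x_1,\ldots,x_{m-1}\in\{1,2,3\}$; (2) if $i\ge 2k_1$, then $x_i\in\{1,2\}$; (3) whenever $i_1,i_2,i_3\in[1,2k_1+1]$ satisfy $i_1+i_2=i_3$, we have $(x_{i_1},x_{i_2},x_{i_3})\neq(1,1,3)$; (4) $\#\{i\in[2k_1+2,m-1]\mid x_i=2\}=k_1+1-a(\overline{x})-2b(\overline{x})$; (5) $a(\overline{x})+b(\overline{x})-c(\overline{x})=2k_1+1-k_2$.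
   Context: A numerical semigroup $S$ is a submonoid of $\mathbb{N}_0$ with finite complement; $g(S)$ is the size of the complement (genus), $m(S)$ the smallest nonzero element (multiplicity), and $e(S)$ the size of the minimal generating set $(S\setminus\{0\})\setminus((S\setminus\{0\})+(S\setminus\{0\}))$ (embedding dimension). For a tuple $\overline{x}=(x_1,\ldots,x_t)\in\{1,2,3\}^t$ define $a(\overline{x})=\#\{i\in[1,t]: x_i=2\}$, $b(\overline{x})=\#\{i\in[1,t]: x_i=3\}$, and $c(\overline{x})=\#\{i\in[1,t]: \exists j_1,j_2\in[1,t] \text{ with } j_1+j_2=i \text{ and } (x_{j_1},x_{j_2},x_i)=(1,1,2)\}$. *)

(* Defs.v *)
From mathcomp Require Import all_boot all_order all_algebra.
Set Implicit Arguments. Unset Strict Implicit. Unset Printing Implicit Defensive.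
Import Order.TTheory GRing.Theory Num.Theory.

Definition is_numsg (S : nat -> bool) : Prop :=
  [/\ S 0,
      (forall a b, S a -> S b -> S (a + b)) &
      exists N, forall n, N <= n -> S n].

Definition mult_is (S : nat -> bool) (m : nat) : Prop :=
  [/\ 0 < m, S m & forall k, 0 < k < m -> ~~ S k].

Definition genus_is (S : nat -> bool) (g : nat) : Prop :=
  exists N, (forall n, N <= n -> S n) /\ count (predC S) (iota 0 N) = g.

Definition mingen (S : nat -> bool) (n : nat) : bool :=
  [&& 0 < n, S n & ~~ has (fun a => [&& 0 < a, S a, 0 < n - a & S (n - a)])
                             (iota 0 n)].

Definition edim_is (S : nat -> bool) (e : nat) : Prop :=
  exists N, (forall n, mingen S n -> n < N) /\ count (mingen S) (iota 0 N) = e.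

Definition semigroup_class (m : nat) (k1 k2 : int) (S : nat -> bool) : Prop :=
  is_numsg S /\ mult_is S m /\
  exists g e : nat, [/\ genus_is S g, edim_is S e,
                        (g%:Z = m%:Z + k1)%R & (e%:Z = g%:Z - k2)%R].

Definition int_to_nat (z : int) : nat := match z with Posz n => n | Negz _ => 0 end.

(* 1-based indexing of tuples: x_i *)
Definition xi (x : seq nat) (i : nat) : nat := nth 0 x i.-1.

Definition a_ (y : seq nat) : nat := count (pred1 2) y.
Definition b_ (y : seq nat) : nat := count (pred1 3) y.
Definition c_ (y : seq nat) : nat :=
  let t := size y in
  count (fun i => has (fun j1 => has (fun j2 =>
            (j1 + j2 == i) && ((xi y j1, xi y j2, xi y i) == (1, 1, 2)))
            (iota 1 t)) (iota 1 t)) (iota 1 t).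

Definition xbar (k1 : int) (x : seq nat) : seq nat :=
  take (int_to_nat (2 * k1 + 1)%R) x.

Definition seq_class (m : nat) (k1 k2 : int) (x : seq nat) : Prop :=
  size x = m.-1 /\
  [/\ all (fun v => v \in [:: 1; 2; 3]) x,
      (forall i : nat, 1 <= i <= m.-1 -> (2 * k1 <= i%:Z)%R ->
                   xi x i \in [:: 1; 2]),
      (forall i1 i2 i3 : nat, 1 <= i1 -> 1 <= i2 -> 1 <= i3 ->
                   (i3%:Z <= 2 * k1 + 1)%R -> i1 + i2 = i3 ->
                   (xi x i1, xi x i2, xi x i3) != (1, 1, 3)),
      ((count (fun i => (2 * k1 + 2 <= i%:Z)%R && (xi x i == 2))
                        (iota 1 m.-1))%:Z
                 = k1 + 1 - (a_ (xbar k1 x))%:Z - 2 * (b_ (xbar k1 x))%:Z)%R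
    & ((a_ (xbar k1 x))%:Z + (b_ (xbar k1 x))%:Z - (c_ (xbar k1 x))%:Z
                 = 2 * k1 + 1 - k2)%R].

(* Main.v *)
Require Import Defs.
From mathcomp Require Import all_boot all_order all_algebra zify.
Import Order.TTheory GRing.Theory Num.Theory.

Lemma count_lin4 (s : seq nat) (P0 P1 P2 P3 Q0 Q1 Q2 Q3 : pred nat) :
  (forall r, r \in s -> (P0 r : nat) + P1 r + P2 r + P3 r = (Q0 r : nat) + Q1 r + Q2 r + Q3 r) ->
  count P0 s + count P1 s + count P2 s + count P3 s =
  count Q0 s + count Q1 s + count Q2 s + count Q3 s.
Proof.
elim: s => [|a s IH] H //=.
have Ha := H a (mem_head a s).
have Hs : forall r, r \in s -> (P0 r : nat) + P1 r + P2 r + P3 r = (Q0 r : nat) + Q1 r + Q2 r + Q3 r.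
  by move=> r hr; apply: H; rewrite inE hr orbT.
have := IH Hs. lia.
Qed.

Lemma count_iota_mono (P : pred nat) a b : count P (iota 0 a) <= count P (iota 0 (a + b)).
Proof. by rewrite iotaD count_cat leq_addr. Qed.

Lemma count_iota_stable (P : pred nat) N N' :
  (forall n, N <= n -> ~~ P n) -> N <= N' -> count P (iota 0 N') = count P (iota 0 N).
Proof.
move=> H le; rewrite -(subnKC le) iotaD count_cat.
have -> : count P (iota (0 + N) (N' - N)) = 0.
  rewrite (@eq_in_count _ _ pred0) ?count_pred0 //.
  by move=> n; rewrite mem_iota => /andP [h _]; apply/negbTE/H.
by rewrite addn0.
Qed.

Lemma iota_block k m : iota (k * m) m = [seq k * m + r | r <- iota 0 m].
Proof. by rewrite -iotaDl addn0. Qed.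

Lemma count_block (P : pred nat) k m :
  count P (iota (k * m) m) = count (fun r => P (k * m + r)) (iota 0 m).
Proof. by rewrite iota_block count_map. Qed.

Lemma count_blocks4 (P : pred nat) m :
  count P (iota 0 (4 * m)) =
  count (fun r => P (0 * m + r)) (iota 0 m) + count (fun r => P (1 * m + r)) (iota 0 m) +
  count (fun r => P (2 * m + r)) (iota 0 m) + count (fun r => P (3 * m + r)) (iota 0 m).
Proof.
rewrite -!count_block.
have -> : 4 * m = m + m + m + m by lia.
rewrite !iotaD !count_cat.
have -> : 0 + m = 1 * m by lia.
have -> : 0 + (m + m) = 2 * m by lia.
have -> : 0 + (m + m + m) = 3 * m by lia.
by rewrite mul0n.
Qed.

Lemma pairing (P : pred nat) n lo :
  (forall j, lo <= j < lo + n -> P j || P (2 * lo + n - 1 - j)) ->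
  n <= 2 * count P (iota lo n).
Proof.
elim/ltn_ind: n lo => n IH lo H.
case: n IH H => [|[|k]] IH H //.
  have := H lo (ltac:(lia)).
  rewrite (_ : 2 * lo + 1 - 1 - lo = lo); last by lia.
  by rewrite orbb /= => ->.
have -> : k.+2 = 1 + (k + 1) by lia.
rewrite iotaD iotaD count_cat count_cat /=.
have H1 := H lo.
have Hk := IH k (ltac:(lia)) (lo + 1).
have : k <= 2 * count P (iota (lo + 1) k).
  apply: Hk => j hj.
  have := H j; rewrite (_ : 2 * lo + k.+2 - 1 - j = 2 * (lo + 1) + k - 1 - j); last by lia.
  by apply; lia.
have : P lo || P (lo + 1 + k).
  have := H1; rewrite (_ : 2 * lo + k.+2 - 1 - lo = lo + 1 + k); last by lia.
  by apply; lia.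
case: (P lo); case: (P (lo + 1 + k)) => //= _; lia.
Qed.

Lemma count_single (P : pred nat) s i : i \in s -> P i -> 1 <= count P s.
Proof. by move=> hi hp; rewrite -has_count; apply/hasP; exists i. Qed.

Lemma split_at (P : pred nat) m i : 1 <= i <= m.-1 ->
  count P (iota 1 m.-1) = count P (iota 1 i.-1) + P i + count P (iota i.+1 (m.-1 - i)).
Proof.
move=> hi.
have -> : m.-1 = i.-1 + (1 + (m.-1 - i)) by lia.
rewrite iotaD iotaD !count_cat /=.
have -> : 1 + i.-1 = i by lia.
have -> : i + 1 = i.+1 by lia.
have -> : i.-1 + (1 + (m.-1 - i)) - i = m.-1 - i by lia.
lia.
Qed.

Lemma ex_inner (Y : nat -> nat) m i : 1 <= i <= m.-1 ->
  (forall j, 1 <= j < i -> (2 <= Y j) || (2 <= Y (i - j))) ->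
  i.-1 + 2 * (2 <= Y i) <= 2 * count (fun j => 2 <= Y j) (iota 1 m.-1).
Proof.
move=> hi H; rewrite (@split_at _ m i hi).
have : i.-1 <= 2 * count (fun j => 2 <= Y j) (iota 1 i.-1).
  apply: pairing => j hj.
  rewrite (_ : 2 * 1 + i.-1 - 1 - j = i - j); last by lia.
  by apply: H; lia.
lia.
Qed.

Lemma ex_both (Y : nat -> nat) m i : 1 <= i <= m.-1 ->
  (forall j, 1 <= j < i -> (2 <= Y j) || (2 <= Y (i - j))) ->
  (forall j, i < j < m -> (2 <= Y j) || (2 <= Y (i + m - j))) ->
  m - 2 + 2 * (2 <= Y i) <= 2 * count (fun j => 2 <= Y j) (iota 1 m.-1).
Proof.
move=> hi H H'; rewrite (@split_at _ m i hi).
have : i.-1 <= 2 * count (fun j => 2 <= Y j) (iota 1 i.-1).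
  apply: pairing => j hj.
  rewrite (_ : 2 * 1 + i.-1 - 1 - j = i - j); last by lia.
  by apply: H; lia.
have : m.-1 - i <= 2 * count (fun j => 2 <= Y j) (iota i.+1 (m.-1 - i)).
  apply: pairing => j hj.
  rewrite (_ : 2 * i.+1 + (m.-1 - i) - 1 - j = i + m - j); last by lia.
  by apply: H'; lia.
lia.
Qed.

Definition gx (m : nat) (x : seq nat) (n : nat) : bool :=
  (n %% m == 0) || (xi x (n %% m) <= n %/ m).
Definition vals m x := forall i, 1 <= i <= m.-1 -> 1 <= xi x i <= 3.
Definition kunz m x := forall i j, 1 <= i -> 1 <= j -> i + j <= m.-1 ->
  xi x i = 1 -> xi x j = 1 -> xi x (i + j) <= 2.
Definition exc m x := count (fun i => 2 <= xi x i) (iota 1 m.-1) +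
                      count (fun i => 3 <= xi x i) (iota 1 m.-1).

Lemma divmod_ex m n : 0 < m -> exists q j, j < m /\ n = q * m + j.
Proof. by move=> hm; exists (n %/ m), (n %% m); rewrite ltn_pmod // -divn_eq. Qed.

Lemma gx_mem m x q j : 0 < m -> j < m -> gx m x (q * m + j) = (j == 0) || (xi x j <= q).
Proof. by move=> hm hj; rewrite /gx modnMDl modn_small // divnMDl // divn_small // addn0. Qed.

Lemma gx_pos m x a : 0 < m -> vals m x -> 0 < a -> gx m x a -> m <= a.
Proof.
move=> hm hv ha; have [q [j [hj e]]] := divmod_ex m a hm; subst a.
rewrite gx_mem //; case: q ha => [|q] ha.
  rewrite mul0n add0n in ha *; case/orP => [/eqP|] h; have := hv j; lia.
move=> _; nia.
Qed.

Lemma gx_big m x n : 0 < m -> vals m x -> 3 * m <= n -> gx m x n.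
Proof.
move=> hm hv; have [q [j [hj ->]]] := divmod_ex m n hm => hn.
have hq : 3 <= q by nia.
rewrite gx_mem //; case: (j =P 0) => //= /eqP hj0.
have := hv j; lia.
Qed.

Lemma gx_add m x a b : 0 < m -> vals m x -> kunz m x ->
  gx m x a -> gx m x b -> gx m x (a + b).
Proof.
move=> hm hv hk; have [qa [ja [hja ->]]] := divmod_ex m a hm.
have [qb [jb [hjb ->]]] := divmod_ex m b hm.
rewrite !gx_mem //.
case: (ltnP (ja + jb) m) => hs.
  rewrite (_ : qa * m + ja + (qb * m + jb) = (qa + qb) * m + (ja + jb)); last by nia.
  rewrite gx_mem //.
  case: (ja =P 0) => [->|/eqP ha0] /=.
    rewrite add0n; case: (jb =P 0) => [->|/eqP hb] //= _ h; lia.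
  case: (jb =P 0) => [->|/eqP hb0] /=.
    by rewrite addn0 (negbTE ha0) /= => h _; lia.
  move=> h1 h2; apply/orP; right.
  have v1 := hv ja; have v2 := hv jb; have v3 := hv (ja + jb).
  case: (xi x ja =P 1) => e1; last by lia.
  case: (xi x jb =P 1) => e2; last by lia.
  have := hk ja jb; lia.
rewrite (_ : qa * m + ja + (qb * m + jb) = (qa + qb + 1) * m + (ja + jb - m)); last by nia.
rewrite gx_mem; last by lia. 2: done.
case: (ja =P 0) => [ea|/eqP ha0] /=; first by exfalso; lia.
case: (jb =P 0) => [eb|/eqP hb0] /=; first by exfalso; lia.
move=> h1 h2; case: (ja + jb - m =P 0) => //= /eqP hn.
have v1 := hv ja; have v2 := hv jb; have v3 := hv (ja + jb - m).
lia.
Qed.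

Lemma gx_numsg m x : 0 < m -> vals m x -> kunz m x -> is_numsg (gx m x).
Proof.
move=> hm hv hk; split.
- by rewrite /gx mod0n.
- by move=> a b; apply: gx_add.
- by exists (3 * m) => n; apply: gx_big.
Qed.

Lemma gx_mult m x : 0 < m -> vals m x -> mult_is (gx m x) m.
Proof.
move=> hm hv; split => //.
- by rewrite /gx modnn.
- move=> k /andP [hk1 hk2]; apply/negP => h.
  have := @gx_pos m x k hm hv hk1 h; lia.
Qed.

Lemma iota0_cons m : 0 < m -> iota 0 m = 0 :: iota 1 m.-1.
Proof. by case: m. Qed.

Lemma count_nz (p : pred nat) m : 0 < m ->
  count (fun r => (r != 0) && p r) (iota 0 m) = count p (iota 1 m.-1).
Proof.
move=> hm; rewrite iota0_cons //= add0n; apply: eq_in_count => r.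
by rewrite mem_iota; case: r.
Qed.

Lemma count_nz1 m : 0 < m -> count (fun r => r != 0) (iota 0 m) = m.-1.
Proof.
move=> hm; rewrite iota0_cons //= add0n.
rewrite (@eq_in_count _ _ predT) ?count_predT ?size_iota //.
by move=> r; rewrite mem_iota; case: r.
Qed.

Lemma gx_genus m x : 0 < m -> vals m x -> genus_is (gx m x) (m.-1 + exc m x).
Proof.
move=> hm hv; exists (4 * m); split.
  by move=> n hn; apply: gx_big => //; lia.
rewrite count_blocks4.
rewrite (@count_lin4 _ _ _ _ _ (fun r => r != 0) (fun r => (r != 0) && (2 <= xi x r))
          (fun r => (r != 0) && (3 <= xi x r)) pred0).
  rewrite count_pred0 addn0 !count_nz // /exc.
  by rewrite count_nz1 // addnA.
move=> r; rewrite mem_iota add0n => hr /=.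
rewrite !gx_mem //.
case: (r =P 0) => [->//|/eqP hr0] /=.
have := hv r; move: (xi x r) => v hv'.
have {hv'} : v = 1 \/ v = 2 \/ v = 3 by lia.
by case=> [->|[->|->]].
Qed.

Lemma not_mingen (S : nat -> bool) n a : 0 < a -> a < n -> S a -> S (n - a) -> ~~ mingen S n.
Proof.
move=> h1 h2 Sa Sb; rewrite /mingen; apply/negP => /and3P [_ _ /hasPn H].
have h3 : 0 < n - a by lia.
have hin : a \in iota 0 n by rewrite mem_iota; lia.
by move/negP: (H a hin); apply; rewrite h1 Sa h3 Sb.
Qed.

Lemma mingen_ok (S : nat -> bool) n : 0 < n -> S n ->
  (forall a, 0 < a -> a < n -> S a -> S (n - a) -> False) -> mingen S n.
Proof.
rewrite /mingen => h1 h2 H; rewrite h1 h2 /=; apply/hasPn => a.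
rewrite mem_iota => /andP [_ ha]; apply/negP => /and4P [a1 a2 a3 a4].
exact: (H a a1 ha a2 a4).
Qed.

Definition mg m x i := mingen (gx m x) (xi x i * m + i).

Lemma gx_mingen_blocks m x k r : 0 < m -> vals m x -> r < m ->
  mingen (gx m x) (k * m + r) = if r == 0 then k == 1 else (k == xi x r) && mg m x r.
Proof.
move=> hm hv hr.
case: (r =P 0) => [e|/eqP hr0].
  subst r; rewrite addn0.
  case: k => [|[|k]].
  - by rewrite mul0n /mingen ltnn.
  - rewrite mul1n /=; apply: mingen_ok => //; first by rewrite /gx modnn.
    move=> a a1 a2 Sa _; have := @gx_pos m x a hm hv a1 Sa; lia.
  - apply/negbTE/(@not_mingen _ _ m) => //; first by nia.
      by rewrite /gx modnn.
    rewrite (_ : k.+2 * m - m = k.+1 * m + 0); last by nia.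
    by rewrite gx_mem.
case: (ltngtP k (xi x r)) => hk.
- rewrite /mingen gx_mem // (negbTE hr0) /=.
  rewrite (_ : (xi x r <= k) = false); last by apply/negbTE; rewrite -ltnNge.
  rewrite andbF /=; case: (k =P xi x r) => //; lia.
- have hv' := hv r.
  apply/negbTE/(@not_mingen _ _ m) => //.
  + have : 1 <= k by lia.
    by case: k hk => // k _ _; rewrite mulSn; lia.
  + by rewrite /gx modnn.
  rewrite (_ : k * m + r - m = k.-1 * m + r); last first.
    have : 1 <= k by lia.
    by case: k hk => // k _ _; rewrite mulSn; lia.
  rewrite gx_mem // (negbTE hr0) /=; lia.
- by rewrite hk.
Qed.

Lemma gx_edim m x : 0 < m -> vals m x -> edim_is (gx m x) (1 + count (mg m x) (iota 1 m.-1)).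
Proof.
move=> hm hv; exists (4 * m); split.
  move=> n hn; rewrite ltnNge; apply/negP => hn4; move: hn; apply/negP.
  apply: (@not_mingen _ _ m) => //; first by lia.
    by rewrite /gx modnn.
  by apply: gx_big => //; lia.
rewrite count_blocks4.
rewrite (@count_lin4 _ _ _ _ _ (fun r => r == 0) (fun r => (r != 0) && mg m x r) pred0 pred0).
  rewrite !count_pred0 !addn0 count_nz // iota0_cons //=.
  have -> : count (eq_op^~ 0) (iota 1 m.-1) = 0.
    rewrite (@eq_in_count _ _ pred0) ?count_pred0 //.
    by move=> r; rewrite mem_iota; case: r.
  by rewrite addn0.
move=> r; rewrite mem_iota add0n => hr /=.
rewrite !gx_mingen_blocks //.
case: (r =P 0) => [->//|/eqP hr0] /=.
have := hv r; move: (xi x r) => v hv'.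
have {hv'} : v = 1 \/ v = 2 \/ v = 3 by lia.
by case=> [->|[->|->]]; case: (mg m x r).
Qed.

Lemma mg1 m x i : 0 < m -> vals m x -> 1 <= i <= m.-1 -> xi x i = 1 -> mg m x i.
Proof.
move=> hm hv hi e; rewrite /mg e; apply: mingen_ok.
- lia.
- rewrite gx_mem; [rewrite e; lia|done|lia].
- move=> a a1 a2 Sa Sb.
  have := @gx_pos m x a hm hv a1 Sa.
  have := @gx_pos m x _ hm hv (ltac:(lia) : 0 < 1 * m + i - a) Sb.
  lia.
Qed.

Lemma mg2 m x i : 0 < m -> vals m x -> 1 <= i <= m.-1 -> xi x i = 2 ->
  mg m x i = ~~ has (fun j => (xi x j == 1) && (xi x (i - j) == 1)) (iota 1 i.-1).
Proof.
move=> hm hv hi e; apply/idP/idP.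
  move=> H; apply/hasP => [[j hj /andP [/eqP e1 /eqP e2]]].
  move: hj; rewrite mem_iota => hj.
  suff : ~~ mg m x i by rewrite H.
  rewrite /mg e.
  apply: (@not_mingen _ _ (1 * m + j)).
  - lia.
  - lia.
  - rewrite gx_mem; [rewrite e1; lia|done|lia].
  - rewrite (_ : 2 * m + i - (1 * m + j) = 1 * m + (i - j)); last by lia.
    rewrite gx_mem; [rewrite e2; lia|done|lia].
move/hasPn => H; rewrite /mg e; apply: mingen_ok.
- lia.
- rewrite gx_mem; [rewrite e; lia|done|lia].
- move=> a a1 a2 Sa Sb.
  have ha := @gx_pos m x a hm hv a1 Sa.
  have hb := @gx_pos m x _ hm hv (ltac:(lia) : 0 < 2 * m + i - a) Sb.
  have [d hd] : exists d, a = 1 * m + d by exists (a - m); lia.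
  subst a.
  rewrite (_ : 2 * m + i - (1 * m + d) = 1 * m + (i - d)) in Sb; last by lia.
  rewrite gx_mem in Sa; last by lia. 2: done.
  rewrite gx_mem in Sb; last by lia. 2: done.
  case: (d =P 0) Sa Sb => [ed|/eqP hd0] /= Sa Sb.
    by subst d; move: Sb; rewrite subn0 e; case/orP => [/eqP|]; lia.
  case: (i - d =P 0) Sb => [ed|/eqP hd1] /= Sb.
    have : d = i by lia.
    by move=> ed'; subst d; move: Sa; rewrite e.
  have := H d; rewrite mem_iota.
  have := hv d; have := hv (i - d).
  move=> v1 v2 H'.
  have : (xi x d == 1) && (xi x (i - d) == 1).
    apply/andP; split; apply/eqP; lia.
  by move=> hh; move: (H' (ltac:(lia))); rewrite hh.
Qed.

Lemma mg3 m x i j : 0 < m -> vals m x -> 1 <= i <= m.-1 -> xi x i = 3 -> i < j < m ->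
  xi x j = 1 -> xi x (i + m - j) = 1 -> ~~ mg m x i.
Proof.
move=> hm hv hi e hj e1 e2; rewrite /mg e.
apply: (@not_mingen _ _ (1 * m + j)).
- lia.
- lia.
- rewrite gx_mem; [rewrite e1; lia|done|lia].
- rewrite (_ : 3 * m + i - (1 * m + j) = 1 * m + (i + m - j)); last by lia.
  rewrite gx_mem; [rewrite e2; lia|done|lia].
Qed.

Definition cpred x T i := has (fun j1 => has (fun j2 =>
   (j1 + j2 == i) && ((xi x j1, xi x j2, xi x i) == (1, 1, 2))) (iota 1 T)) (iota 1 T).

Lemma cpredP x T i : 1 <= i <= T -> cpred x T i =
  (xi x i == 2) && has (fun j => (xi x j == 1) && (xi x (i - j) == 1)) (iota 1 i.-1).
Proof.
move=> hi; apply/idP/idP.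
  case/hasP => j1 hj1 /hasP [j2 hj2 /andP [/eqP hs /eqP [e1 e2 e3]]].
  move: hj1 hj2; rewrite !mem_iota => hj1 hj2.
  rewrite e3 eqxx /=; apply/hasP; exists j1; first by rewrite mem_iota; lia.
  by rewrite e1 (_ : i - j1 = j2) ?e2 //; lia.
case/andP => /eqP e /hasP [j hj /andP [/eqP e1 /eqP e2]].
move: hj; rewrite mem_iota => hj.
apply/hasP; exists j; first by rewrite mem_iota; lia.
apply/hasP; exists (i - j); first by rewrite mem_iota; lia.
rewrite e1 e2 e eqxx andbT; apply/eqP; lia.
Qed.

Lemma inner_of m x i : vals m x -> 1 <= i <= m.-1 ->
  (forall j, 1 <= j < i -> ~~ ((xi x j == 1) && (xi x (i - j) == 1))) ->
  forall j, 1 <= j < i -> (2 <= xi x j) || (2 <= xi x (i - j)).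
Proof.
move=> hv hi H j hj; have := H j hj; have := hv j; have := hv (i - j).
case: (xi x j =P 1); case: (xi x (i - j) =P 1) => //= h1 h2 v1 v2 _; apply/orP; lia.
Qed.

Lemma no3late m K x i : 0 < m -> vals m x -> kunz m x -> exc m x = K ->
  1 <= i <= m.-1 -> xi x i = 3 -> i + 3 <= 2 * K.
Proof.
move=> hm hv hk he hi e.
have H := @ex_inner (xi x) m i hi.
have : i.-1 + 2 * (2 <= xi x i) <= 2 * count (fun j => 2 <= xi x j) (iota 1 m.-1).
  apply: H; apply: (@inner_of m) => // j hj; apply/negP => /andP [/eqP e1 /eqP e2].
  have := hk j (i - j); rewrite (_ : j + (i - j) = i); last by lia.
  rewrite e; lia.
have : 1 <= count (fun j => 3 <= xi x j) (iota 1 m.-1).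
  by apply: (@count_single _ _ i); [rewrite mem_iota; lia | rewrite e].
move: he; rewrite /exc e /=; lia.
Qed.

Lemma nonmin3 m K x i : 0 < m -> 2 * K <= m -> vals m x -> kunz m x -> exc m x = K ->
  1 <= i <= m.-1 -> xi x i = 3 -> ~~ mg m x i.
Proof.
move=> hm hmK hv hk he hi e; apply/negP => hmg.
have : m - 2 + 2 * (2 <= xi x i) <= 2 * count (fun j => 2 <= xi x j) (iota 1 m.-1).
  apply: ex_both => //.
  - apply: (@inner_of m) => // j hj; apply/negP => /andP [/eqP e1 /eqP e2].
    have := hk j (i - j); rewrite (_ : j + (i - j) = i); last by lia.
    rewrite e; lia.
  - move=> j hj; have := hv j; have := hv (i + m - j).
    case: (xi x j =P 1); case: (xi x (i + m - j) =P 1) => h1 h2 v1 v2; try (apply/orP; lia).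
    by have := @mg3 m x i j hm hv hi e hj h2 h1; rewrite hmg.
have : 1 <= count (fun j => 3 <= xi x j) (iota 1 m.-1).
  by apply: (@count_single _ _ i); [rewrite mem_iota; lia | rewrite e].
move: he; rewrite /exc e /=; lia.
Qed.

Lemma nonmin2late m K x i : 0 < m -> vals m x -> exc m x = K ->
  1 <= i <= m.-1 -> xi x i = 2 -> (2 * K).-1 < i -> ~~ mg m x i.
Proof.
move=> hm hv he hi e hT; apply/negP => hmg.
move: (hmg); rewrite mg2 // => /hasPn H.
have : i.-1 + 2 * (2 <= xi x i) <= 2 * count (fun j => 2 <= xi x j) (iota 1 m.-1).
  apply: ex_inner => //; apply: (@inner_of m) => // j hj; apply: H; rewrite mem_iota; lia.
move: he; rewrite /exc e /=; lia.
Qed.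

Definition cnt x v T := count (fun i => xi x i == v) (iota 1 T).
Definition D2 m K x := count (fun i => (2 * K <= i) && (xi x i == 2)) (iota 1 m.-1).

Lemma good_facts m K x : 0 < m -> 2 * K <= m -> vals m x -> kunz m x -> exc m x = K ->
  [/\ forall i, 1 <= i <= m.-1 -> xi x i = 3 -> i + 3 <= 2 * K,
      D2 m K x + cnt x 2 (2 * K).-1 + 2 * cnt x 3 (2 * K).-1 = K &
      count (predC (mg m x)) (iota 1 m.-1) + cnt x 2 (2 * K).-1 + cnt x 3 (2 * K).-1
        = K + count (cpred x (2 * K).-1) (iota 1 (2 * K).-1)].
Proof.
move=> hm hmK hv hk he.
have n3 := @no3late m K x _ hm hv hk he.
set T := (2 * K).-1.
have hsplit : iota 1 m.-1 = iota 1 T ++ iota (1 + T) (m.-1 - T).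
  by rewrite -iotaD; congr iota; rewrite /T; lia.
have d0 : count (fun i => (2 * K <= i) && (xi x i == 2)) (iota 1 T) = 0.
  rewrite (@eq_in_count _ _ pred0) ?count_pred0 // => i; rewrite mem_iota /T => hi.
  by rewrite (_ : 2 * K <= i = false) //; apply/negbTE; rewrite -ltnNge; lia.
have e1 : count (fun i => 2 <= xi x i) (iota 1 T) + count (fun i => 3 <= xi x i) (iota 1 T)
          = cnt x 2 T + 2 * cnt x 3 T.
  have := @count_lin4 (iota 1 T) (fun i => 2 <= xi x i) (fun i => 3 <= xi x i) pred0 pred0
     (fun i => xi x i == 2) (fun i => xi x i == 3) (fun i => xi x i == 3) pred0.
  rewrite !count_pred0 !addn0 /cnt => ->; first lia.
  move=> r; rewrite mem_iota /T => hr /=.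
  have := hv r; move: (xi x r) => v hv'.
  have {hv'} : v = 1 \/ v = 2 \/ v = 3 by lia.
  by case=> [->|[->|->]].
have e2 : count (fun i => 2 <= xi x i) (iota (1 + T) (m.-1 - T)) +
          count (fun i => 3 <= xi x i) (iota (1 + T) (m.-1 - T))
          = count (fun i => (2 * K <= i) && (xi x i == 2)) (iota (1 + T) (m.-1 - T)).
  have := @count_lin4 (iota (1 + T) (m.-1 - T)) (fun i => 2 <= xi x i) (fun i => 3 <= xi x i)
     pred0 pred0 (fun i => (2 * K <= i) && (xi x i == 2)) pred0 pred0 pred0.
  rewrite !count_pred0 !addn0 => ->; first lia.
  move=> r; rewrite mem_iota /T => hr /=.
  have hK : 2 * K <= r by lia.
  rewrite hK /=.
  have := hv r; have := n3 r; move: (xi x r) => v h3 hv'.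
  have {hv'} : v = 1 \/ v = 2 \/ v = 3 by lia.
  case=> [->|[->|e]] //; subst v; have := h3 (ltac:(lia)) erefl; lia.
have eD : D2 m K x = count (fun i => (2 * K <= i) && (xi x i == 2)) (iota (1 + T) (m.-1 - T)).
  by rewrite /D2 hsplit count_cat d0.
have F4 : D2 m K x + cnt x 2 T + 2 * cnt x 3 T = K.
  move: he; rewrite /exc hsplit !count_cat eD; lia.
split => //.
have m1 : count (predC (mg m x)) (iota 1 T) = cnt x 3 T + count (cpred x T) (iota 1 T).
  have := @count_lin4 (iota 1 T) (predC (mg m x)) pred0 pred0 pred0
     (fun i => xi x i == 3) (cpred x T) pred0 pred0.
  rewrite !count_pred0 !addn0 /cnt => ->; first done.
  move=> r; rewrite mem_iota /T => hr /=.
  rewrite cpredP; last by lia.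
  have hr' : 1 <= r <= m.-1 by lia.
  have v := hv r hr'; case: (xi x r =P 1) => [e|nn1]; first by rewrite mg1 // e.
  case: (xi x r =P 2) => [e|nn2].
    by rewrite mg2 // e /= negbK; case: has.
  case: (xi x r =P 3) => [e|nn3]; last by lia.
  by rewrite (negbTE (@nonmin3 m K x r hm hmK hv hk he hr' e)) /=.
have m2 : count (predC (mg m x)) (iota (1 + T) (m.-1 - T)) =
          count (fun i => (2 * K <= i) && (xi x i == 2)) (iota (1 + T) (m.-1 - T)).
  apply: eq_in_count => r; rewrite mem_iota /T => hr /=.
  have hK : 2 * K <= r by lia.
  have hr' : 1 <= r <= m.-1 by lia.
  rewrite hK /=.
  have v := hv r hr'; case: (xi x r =P 1) => [e|nn1]; first by rewrite mg1 // e.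
  case: (xi x r =P 2) => [e|nn2].
    by rewrite (negbTE (@nonmin2late m K x r hm hv he hr' e (ltac:(lia)))).
  case: (xi x r =P 3) => [e|nn3]; last by lia.
  have := n3 r hr' e; lia.
rewrite hsplit count_cat m1 m2 -eD; lia.
Qed.

Definition fS m (S : nat -> bool) : seq nat :=
  [seq (if S (1 * m + r) then 1 else if S (2 * m + r) then 2 else 3) | r <- iota 1 m.-1].

Lemma size_fS m S : size (fS m S) = m.-1.
Proof. by rewrite size_map size_iota. Qed.

Lemma xi_fS m S i : 1 <= i <= m.-1 ->
  xi (fS m S) i = if S (1 * m + i) then 1 else if S (2 * m + i) then 2 else 3.
Proof.
move=> hi; rewrite /xi /fS (nth_map 0); last by rewrite size_iota; lia.
by rewrite nth_iota; [rewrite (_ : 1 + i.-1 = i) //; lia | lia].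
Qed.

Lemma fS_gx m x : 0 < m -> vals m x -> size x = m.-1 -> fS m (gx m x) = x.
Proof.
move=> hm hv hs; apply: (@eq_from_nth _ 0); rewrite ?size_fS ?hs // => i hi.
have := @xi_fS m (gx m x) i.+1 (ltac:(lia)); rewrite /xi /= => ->.
rewrite !gx_mem //; try lia.
have := hv i.+1 (ltac:(lia)); rewrite /xi /=; move: (nth 0 x i) => v hv'.
have {hv'} : v = 1 \/ v = 2 \/ v = 3 by lia.
by case=> [->|[->|->]].
Qed.

Lemma count_stable_N (P : pred nat) N N' :
  (forall n, N <= n -> ~~ P n) -> (forall n, N' <= n -> ~~ P n) ->
  count P (iota 0 N) = count P (iota 0 N').
Proof.
move=> H H'.
rewrite -(@count_iota_stable P N (N + N')) //; last by lia.
rewrite (@count_iota_stable P N' (N + N')) //; lia.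
Qed.

Lemma genus_uniq S g g' : genus_is S g -> genus_is S g' -> g = g'.
Proof.
move=> [N [HN <-]] [N' [HN' <-]]; apply: count_stable_N => n hn /=;
  rewrite negbK; [exact: HN | exact: HN'].
Qed.

Lemma edim_uniq S e e' : edim_is S e -> edim_is S e' -> e = e'.
Proof.
move=> [N [HN <-]] [N' [HN' <-]]; apply: count_stable_N => n hn;
  apply/negP => h; [have := HN n h | have := HN' n h]; lia.
Qed.

Lemma genus_ext S S' g : S =1 S' -> genus_is S g -> genus_is S' g.
Proof.
move=> E [N [HN <-]]; exists N; split; first by move=> n hn; rewrite -E; apply: HN.
by apply: eq_count => n /=; rewrite E.
Qed.

Lemma mingen_ext S S' : S =1 S' -> mingen S =1 mingen S'.
Proof.
move=> E n; rewrite /mingen E; congr [&& _, _ & ~~ _].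
by apply: eq_has => a; rewrite !E.
Qed.

Lemma edim_ext S S' e : S =1 S' -> edim_is S e -> edim_is S' e.
Proof.
move=> E [N [HN <-]]; exists N; split; first by move=> n; rewrite -(@mingen_ext S S' E); apply: HN.
by apply: eq_count => n; rewrite (@mingen_ext S S' E).
Qed.

Lemma genus_le S g n : genus_is S g -> count (predC S) (iota 0 n) <= g.
Proof.
move=> [N [HN <-]].
rewrite -(@count_iota_stable (predC S) N (n + N)); last by lia.
  exact: count_iota_mono.
by move=> k hk /=; rewrite negbK; apply: HN.
Qed.

Lemma S_addm S m n k : is_numsg S -> S m -> S n -> S (k * m + n).
Proof.
move=> [S0 Sadd _] Sm Sn; elim: k => [|k IH]; first by rewrite mul0n add0n.
by rewrite mulSn -addnA; apply: Sadd.
Qed.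

Definition Y4 (S : nat -> bool) m i :=
  if S (1 * m + i) then 1 else if S (2 * m + i) then 2 else if S (3 * m + i) then 3 else 4.

Lemma gaps4 S m : is_numsg S -> mult_is S m ->
  count (predC S) (iota 0 (4 * m)) = m.-1 +
   (count (fun i => 2 <= Y4 S m i) (iota 1 m.-1) + count (fun i => 3 <= Y4 S m i) (iota 1 m.-1)
    + count (fun i => 4 <= Y4 S m i) (iota 1 m.-1)).
Proof.
move=> hS [hm Sm Hm].
have [S0 Sadd _] := hS.
rewrite count_blocks4.
rewrite (@count_lin4 _ _ _ _ _ (fun r => r != 0) (fun r => (r != 0) && (2 <= Y4 S m r))
          (fun r => (r != 0) && (3 <= Y4 S m r)) (fun r => (r != 0) && (4 <= Y4 S m r))).
  by rewrite !count_nz // count_nz1 // !addnA.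
move=> r; rewrite mem_iota add0n => hr /=.
case: (r =P 0) => [->|/eqP hr0] /=.
  have Sk : forall k, S (k * m + 0) by move=> k; apply: S_addm.
  by rewrite !Sk.
have h0 : S (0 * m + r) = false by rewrite mul0n add0n; apply/negbTE/Hm; lia.
have h1 : S (1 * m + r) -> S (2 * m + r).
  by move=> h; rewrite (_ : 2 * m + r = 1 * m + (1 * m + r)); [apply: S_addm | lia].
have h2 : S (2 * m + r) -> S (3 * m + r).
  by move=> h; rewrite (_ : 3 * m + r = 1 * m + (2 * m + r)); [apply: S_addm | lia].
rewrite h0 /Y4.
case e1: (S (1 * m + r)); first by rewrite h2 ?h1.
case e2: (S (2 * m + r)); first by rewrite h2.
by case: (S (3 * m + r)).
Qed.

Lemma Y4_lt2 S m j : Y4 S m j < 2 -> S (1 * m + j).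
Proof. by rewrite /Y4; case: (S (1 * m + j)) => //; case: ifP => //; case: ifP. Qed.

Lemma S3 S m K : is_numsg S -> mult_is S m -> genus_is S (m.-1 + K) -> 2 * K <= m ->
  forall i, 1 <= i <= m.-1 -> S (3 * m + i).
Proof.
move=> hS hmu hg hmK i hi.
have [S0 Sadd _] := hS; have [hm Sm Hm] := hmu.
case e3: (S (3 * m + i)) => //.
have e2 : S (2 * m + i) = false.
  apply/negP => h; move: e3; rewrite (_ : 3 * m + i = 1 * m + (2 * m + i)); last by lia.
  by rewrite S_addm.
have e1 : S (1 * m + i) = false.
  apply/negP => h; move: e2; rewrite (_ : 2 * m + i = 1 * m + (1 * m + i)); last by lia.
  by rewrite S_addm.
have hY : Y4 S m i = 4 by rewrite /Y4 e1 e2 e3.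
have hle := @genus_le S _ (4 * m) hg; rewrite gaps4 // in hle.
have : m - 2 + 2 * (2 <= Y4 S m i) <= 2 * count (fun j => 2 <= Y4 S m j) (iota 1 m.-1).
  apply: ex_both => //.
  - move=> j hj; case: (ltnP 1 (Y4 S m j)) => //= b1; have a1 := @Y4_lt2 S m j (ltac:(lia)).
    case: (ltnP 1 (Y4 S m (i - j))) => //= b2; have a2 := @Y4_lt2 S m (i - j) (ltac:(lia)).
    have := Sadd _ _ a1 a2; rewrite (_ : 1 * m + j + (1 * m + (i - j)) = 2 * m + i); last by lia.
    by rewrite e2.
  - move=> j hj; case: (ltnP 1 (Y4 S m j)) => //= b1; have a1 := @Y4_lt2 S m j (ltac:(lia)).
    case: (ltnP 1 (Y4 S m (i + m - j))) => //= b2; have a2 := @Y4_lt2 S m (i + m - j) (ltac:(lia)).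
    have := Sadd _ _ a1 a2; rewrite (_ : 1 * m + j + (1 * m + (i + m - j)) = 3 * m + i); last by lia.
    by rewrite e3.
have c3 : 1 <= count (fun j => 3 <= Y4 S m j) (iota 1 m.-1).
  by apply: (@count_single _ _ i); [rewrite mem_iota; lia | rewrite hY].
have c4 : 1 <= count (fun j => 4 <= Y4 S m j) (iota 1 m.-1).
  by apply: (@count_single _ _ i); [rewrite mem_iota; lia | rewrite hY].
rewrite hY /=; lia.
Qed.

Lemma vals_fS m S : vals m (fS m S).
Proof. by move=> i hi; rewrite xi_fS //; case: ifP => //; case: ifP. Qed.

Lemma S_eq_gx S m K : is_numsg S -> mult_is S m -> genus_is S (m.-1 + K) -> 2 * K <= m ->
  S =1 gx m (fS m S).
Proof.
move=> hS hmu hg hmK n.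
have [S0 Sadd _] := hS; have [hm Sm Hm] := hmu.
have [q [j [hj e]]] := divmod_ex m n hm; subst n.
rewrite gx_mem //.
case: (j =P 0) => [->|/eqP hj0] /=; first by apply: S_addm.
rewrite xi_fS; last by lia.
have h3 := @S3 S m K hS hmu hg hmK j (ltac:(lia)).
apply/idP/idP.
  case: q => [|[|[|q]]].
  - by rewrite mul0n add0n => h; have := Hm j; rewrite h; lia.
  - by move=> ->.
  - by move=> ->; case: ifP.
  - by move=> _; case: ifP => //; case: ifP.
case e1: (S (1 * m + j)) => h.
  rewrite (_ : q * m + j = (q - 1) * m + (1 * m + j)); last by nia.
  exact: S_addm.
case e2: (S (2 * m + j)) h => h.
  rewrite (_ : q * m + j = (q - 2) * m + (2 * m + j)); last by nia.
  exact: S_addm.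
rewrite (_ : q * m + j = (q - 3) * m + (3 * m + j)); last by nia.
exact: S_addm.
Qed.

Lemma kunz_fS S m : is_numsg S -> kunz m (fS m S).
Proof.
move=> [S0 Sadd _] i j hi hj hij.
rewrite !xi_fS; try lia.
case e1: (S (1 * m + i)); last by case: ifP.
case e2: (S (1 * m + j)); last by case: ifP.
move=> _ _.
have := Sadd _ _ e1 e2; rewrite (_ : 1 * m + i + (1 * m + j) = 2 * m + (i + j)); last by lia.
by move=> ->; case: ifP.
Qed.

Lemma count_seq_idx (P : pred nat) s : count P s = count (fun i => P (xi s i)) (iota 1 (size s)).
Proof.
rewrite -{1}(mkseq_nth 0 s) /mkseq count_map.
rewrite (_ : iota 1 (size s) = iota (1 + 0) (size s)) // iotaDl count_map.
by apply: eq_count => i /=; rewrite /xi.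
Qed.

Lemma xi_take x T j : 1 <= j <= T -> xi (take T x) j = xi x j.
Proof. by move=> hj; rewrite /xi nth_take //; lia. Qed.

Lemma a_xbar x T : T <= size x -> a_ (take T x) = cnt x 2 T.
Proof.
move=> hT; rewrite /a_ count_seq_idx size_takel //; apply: eq_in_count => i.
by rewrite mem_iota => hi /=; rewrite xi_take //; lia.
Qed.

Lemma b_xbar x T : T <= size x -> b_ (take T x) = cnt x 3 T.
Proof.
move=> hT; rewrite /b_ count_seq_idx size_takel //; apply: eq_in_count => i.
by rewrite mem_iota => hi /=; rewrite xi_take //; lia.
Qed.

Lemma c_xbar x T : T <= size x -> c_ (take T x) = count (cpred x T) (iota 1 T).
Proof.
move=> hT; rewrite /c_ size_takel //; apply: eq_in_count => i.
rewrite mem_iota => hi; apply: eq_in_has => j1; rewrite mem_iota => h1.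
apply: eq_in_has => j2; rewrite mem_iota => h2.
by rewrite !xi_take //; lia.
Qed.

Lemma T_eq K : int_to_nat (2 * (K%:Z - 1) + 1)%R = (2 * K).-1.
Proof.
case: K => [|K] //.
have -> : (2 * ((K.+1)%:Z - 1) + 1 = (2 * K + 1)%:Z)%R by lia.
by rewrite /=; lia.
Qed.

Lemma in123 v : (v \in [:: 1; 2; 3]) = (1 <= v <= 3).
Proof. by rewrite !inE; case: v => [|[|[|[|v]]]]. Qed.

Lemma in12 v : (v \in [:: 1; 2]) = (1 <= v <= 2).
Proof. by rewrite !inE; case: v => [|[|[|v]]]. Qed.

Lemma seq_to_good m K k2 x : 0 < m -> 2 * K <= m -> seq_class m (K%:Z - 1) k2 x ->
  [/\ size x = m.-1, vals m x, kunz m x, exc m x = K &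
      ((cnt x 2 (2 * K).-1)%:Z + (cnt x 3 (2 * K).-1)%:Z
        - (count (cpred x (2 * K).-1) (iota 1 (2 * K).-1))%:Z
       = 2 * (K%:Z - 1) + 1 - k2)%R].
Proof.
move=> hm hmK [hs [h1 h2 h3 h4 h5]].
rewrite /xbar T_eq in h4 h5.
have hT : (2 * K).-1 <= size x by rewrite hs; lia.
rewrite a_xbar // b_xbar // c_xbar // in h4 h5.
have hv : vals m x.
  move=> i hi; rewrite -in123; move/allP: h1; apply.
  by rewrite /xi; apply: mem_nth; rewrite hs; lia.
have hk : kunz m x.
  move=> i j hi hj hij e1 e2.
  case: (ltnP (i + j) (2 * K)) => hK.
    have := h3 i j (i + j) hi hj (ltac:(lia)) (ltac:(lia)) erefl.
    rewrite e1 e2; have := hv (i + j) (ltac:(lia)).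
    case: (xi x (i + j) =P 3) => [->//|ne] hv3 _; lia.
  have := h2 (i + j) (ltac:(lia)) (ltac:(lia)); rewrite in12; lia.
have n3 : forall i, (2 * K).-1 < i <= m.-1 -> xi x i <= 2.
  by move=> i hi; have := h2 i (ltac:(lia)) (ltac:(lia)); rewrite in12; lia.
split => //.
set T := (2 * K).-1.
have hsplit : iota 1 m.-1 = iota 1 T ++ iota (1 + T) (m.-1 - T).
  by rewrite -iotaD; congr iota; rewrite /T; lia.
have e1 : count (fun i => 2 <= xi x i) (iota 1 T) + count (fun i => 3 <= xi x i) (iota 1 T)
          = cnt x 2 T + 2 * cnt x 3 T.
  have := @count_lin4 (iota 1 T) (fun i => 2 <= xi x i) (fun i => 3 <= xi x i) pred0 pred0
     (fun i => xi x i == 2) (fun i => xi x i == 3) (fun i => xi x i == 3) pred0.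
  rewrite !count_pred0 !addn0 /cnt => ->; first lia.
  move=> r; rewrite mem_iota /T => hr /=.
  have := hv r; move: (xi x r) => v hv'.
  have {hv'} : v = 1 \/ v = 2 \/ v = 3 by lia.
  by case=> [->|[->|->]].
have e2 : count (fun i => 2 <= xi x i) (iota (1 + T) (m.-1 - T)) +
          count (fun i => 3 <= xi x i) (iota (1 + T) (m.-1 - T))
          = count (fun i => (2 * (K%:Z - 1) + 2 <= i%:Z)%R && (xi x i == 2)) (iota 1 m.-1).
  rewrite hsplit count_cat.
  rewrite (@eq_in_count _ _ pred0 (iota 1 T)); last first.
    move=> i; rewrite mem_iota /T => hi.
    by rewrite (_ : (2 * (K%:Z - 1) + 2 <= i%:Z)%R = false) //; apply/negbTE; lia.
  rewrite count_pred0 add0n.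
  have := @count_lin4 (iota (1 + T) (m.-1 - T)) (fun i => 2 <= xi x i) (fun i => 3 <= xi x i)
     pred0 pred0 (fun i => (2 * (K%:Z - 1) + 2 <= i%:Z)%R && (xi x i == 2)) pred0 pred0 pred0.
  rewrite !count_pred0 !addn0 => ->; first lia.
  move=> r; rewrite mem_iota /T => hr /=.
  rewrite (_ : (2 * (K%:Z - 1) + 2 <= r%:Z)%R = true); last by lia.
  have := hv r; have := n3 r; move: (xi x r) => v h3' hv'.
  have : v = 1 \/ v = 2 by lia.
  by case=> ->.
rewrite /exc hsplit !count_cat.
move: h4; rewrite -e2 -/T; lia.
Qed.

Lemma good_to_seq m K k2 x : 0 < m -> 2 * K <= m -> size x = m.-1 -> vals m x -> kunz m x ->
  exc m x = K ->
  ((cnt x 2 (2 * K).-1)%:Z + (cnt x 3 (2 * K).-1)%:Z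
        - (count (cpred x (2 * K).-1) (iota 1 (2 * K).-1))%:Z
       = 2 * (K%:Z - 1) + 1 - k2)%R ->
  seq_class m (K%:Z - 1) k2 x.
Proof.
move=> hm hmK hs hv hk he h5.
have [n3 F4 F5] := @good_facts m K x hm hmK hv hk he.
have hT : (2 * K).-1 <= size x by rewrite hs; lia.
split => //; split.
- apply/allP => v hin; rewrite in123.
  have hi : index v x < size x by rewrite index_mem.
  have := hv (index v x).+1 (ltac:(rewrite -hs; lia)).
  by rewrite /xi /= nth_index.
- move=> i hi hK; rewrite in12; have := hv i hi.
  case: (xi x i =P 3) => [e|ne]; last by lia.
  have := n3 i hi e; lia.
- move=> i1 i2 i3 hi1 hi2 hi3 hK hsum; apply/negP => /eqP [e1 e2 e3].
  have := hk i1 i2 hi1 hi2 (ltac:(lia)) e1 e2; rewrite hsum e3; lia.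
- rewrite /xbar T_eq a_xbar // b_xbar //.
  rewrite (@eq_count _ _ (fun i => (2 * K <= i) && (xi x i == 2))); last first.
    move=> i /=; congr andb; apply/idP/idP; lia.
  rewrite -/(D2 m K x); lia.
- by rewrite /xbar T_eq a_xbar // b_xbar // c_xbar.
Qed.

Theorem theorem8p5 (k1 k2 : int) (m : nat) :
  (-1 <= k1)%R -> (k1 <= k2)%R -> (2 * k1 + 2 <= m%:Z)%R -> 0 < m ->
  exists (f : (nat -> bool) -> seq nat) (g : seq nat -> (nat -> bool)),
    [/\ (forall S S', semigroup_class m k1 k2 S -> S =1 S' -> f S = f S'),
        (forall S, semigroup_class m k1 k2 S ->
                   seq_class m k1 k2 (f S) /\ g (f S) =1 S)
      & (forall x, seq_class m k1 k2 x ->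
                   semigroup_class m k1 k2 (g x) /\ f (g x) = x)].
Proof.
move=> hk1 hk12 hm2 hm.
have [K eK] : exists K : nat, k1 = (K%:Z - 1)%R.
  case: k1 hk1 {hk12 hm2} => [n|n] h; first by exists n.+1; lia.
  by exists 0; lia.
subst k1.
have hmK : 2 * K <= m by lia.
exists (fS m), (gx m); split.
- by move=> S S' _ E; rewrite /fS; apply: eq_map => r; rewrite !E.
- move=> S [hS [hmu [g [e [hg he eg ee]]]]].
  have gdef : g = m.-1 + K by lia.
  subst g.
  have E := @S_eq_gx S m K hS hmu hg hmK.
  have hv := vals_fS m S.
  have hk := @kunz_fS S m hS.
  have hex : exc m (fS m S) = K.
    have h1 := @gx_genus m (fS m S) hm hv.
    have h2 := @genus_ext _ _ _ E hg.
    have := @genus_uniq _ _ _ h1 h2; lia.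
  split; last by move=> n; rewrite -E.
  apply: good_to_seq => //; first exact: size_fS.
  have [n3 F4 F5] := @good_facts m K (fS m S) hm hmK hv hk hex.
  have h1 := @gx_edim m (fS m S) hm hv.
  have h2 := @edim_ext _ _ _ E he.
  have eeq := @edim_uniq _ _ _ h1 h2.
  have hc := count_predC (mg m (fS m S)) (iota 1 m.-1).
  rewrite size_iota in hc.
  move: F5 hc eeq ee.
  move: (count (predC (mg m (fS m S))) (iota 1 m.-1)) => A.
  move: (count (mg m (fS m S)) (iota 1 m.-1)) => B.
  move: (cnt (fS m S) 2 (2 * K).-1) (cnt (fS m S) 3 (2 * K).-1) => a b.
  move: (count (cpred (fS m S) (2 * K).-1) (iota 1 (2 * K).-1)) => c.
  lia.
- move=> x hx.
  have [hs hv hk hex h5] := @seq_to_good m K k2 x hm hmK hx.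
  split; last exact: fS_gx.
  split; first exact: gx_numsg.
  split; first exact: gx_mult.
  exists (m.-1 + K), (1 + count (mg m x) (iota 1 m.-1)); split.
  + by rewrite -hex; apply: gx_genus.
  + exact: gx_edim.
  + lia.
  + have [_ _ F5] := @good_facts m K x hm hmK hv hk hex.
    have hc := count_predC (mg m x) (iota 1 m.-1).
    rewrite size_iota in hc.
    move: F5 hc h5.
    move: (count (predC (mg m x)) (iota 1 m.-1)) => A.
    move: (count (mg m x) (iota 1 m.-1)) => B.
    move: (cnt x 2 (2 * K).-1) (cnt x 3 (2 * K).-1) => a b.
    move: (count (cpred x (2 * K).-1) (iota 1 (2 * K).-1)) => c.
    lia.
Qed.
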